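(* Let $\beta$ be an algebraic number such that one of its conjugates (roots of its minimal polynomial over $\mathbb{Q}$) is a real number greater than $1$. Then $p_\beta(\alpha) < \infty$ for every $\alpha \in \mathbb{R}$.
   Context: For $\beta, \alpha \in \mathbb{C}$, $p_\beta(\alpha) \in \mathbb{Z}_{\geq 0}\cup\{\infty\}$ is the number of polynomials $f \in \mathbb{Z}_{\geq 0}[x]$ (non-negative integer coefficients) with $f(\beta) = \alpha$. *)

(* Defs.v *)
From HB Require Import structures.
From mathcomp Require Import all_boot all_order all_algebra.
From mathcomp Require Import reals.
From mathcomp.real_closed Require Import complex.
Set Implicit Arguments. Unset Strict Implicit. Unset Printing Implicit Defensive.
Import Order.TTheory GRing.Theory Num.Theory.
Local Open Scope ring_scope.

Definition algebraicQ (C : fieldType) (b : C) : Prop :=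
  exists p : {poly rat}, p != 0 /\ root (map_poly ratr p) b.

Definition minpolyQ (C : fieldType) (p : {poly rat}) (b : C) : Prop :=
  [/\ p \is monic, irreducible_poly p & root (map_poly ratr p) b].

Definition conjugateQ (C : fieldType) (b g : C) : Prop :=
  exists p : {poly rat}, minpolyQ p b /\ root (map_poly ratr p) g.

Definition eval_nat (C : fieldType) (f : {poly nat}) (b : C) : C :=
  (map_poly (fun n : nat => n%:R : C) f).[b].

(* p_b(a) < oo: finitely many f in Z_{>=0}[x] with f(b) = a. *)
Definition p_finite (C : fieldType) (b a : C) : Prop :=
  exists s : seq {poly nat}, forall f : {poly nat}, eval_nat f b = a -> f \in s.

(* Main.v *)
Require Import Defs.
From HB Require Import structures.
From mathcomp Require Import all_boot all_order all_algebra.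
From mathcomp Require Import reals.
From mathcomp.real_closed Require Import complex.
From Stdlib Require Import Classical.
From mathcomp Require Import ring lra.
Import Order.TTheory GRing.Theory Num.Theory.
Local Open Scope ring_scope.

Lemma rootQ (C : numFieldType) (p q : {poly rat}) (b g : C) :
  irreducible_poly p -> root (map_poly ratr p) b -> root (map_poly ratr p) g ->
  root (map_poly ratr q) b -> root (map_poly ratr q) g.
Proof.
move=> irr pb pg qb.
have: p %| q.
  apply/negPn; rewrite -irreducible_poly_coprime //; apply/negP.
  move=> /Bezout_coprimepP [[u v] /= H].
  have /size_poly1P [c c0 Hc] : size (u * p + v * q) == 1%N.
    by rewrite (eqp_size H) size_poly1.
  have := congr1 (fun P => (map_poly (ratr : rat -> C) P).[b]) Hc.
  rewrite /= map_polyC hornerC rmorphD !rmorphM /= hornerD !hornerM.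
  rewrite (eqP pb) (eqP qb) !mulr0 addr0 => /esym /eqP.
  by rewrite fmorph_eq0 (negbTE c0).
move/dvdpP => [r ->].
by rewrite /root rmorphM hornerM (eqP pg) mulr0.
Qed.
Section S.
Variable R : realType.

Definition pR (f : {poly nat}) : {poly R} := map_poly (fun n : nat => n%:R) f.

Lemma hornerpR (f : {poly nat}) (r : R) :
  (pR f).[r] = \sum_(j < size f) (nth 0%N f j)%:R * r ^+ j.
Proof.
rewrite (@horner_coef_wide _ (size f)); last by rewrite /pR size_poly.
by apply: eq_bigr => j _; rewrite /pR coef_map_id0.
Qed.

Lemma term_le (f : {poly nat}) (r : R) i : 1 <= r ->
  (nth 0%N f i)%:R * r ^+ i <= (pR f).[r].
Proof.
move=> r1; rewrite hornerpR.
have r0 : 0 <= r by apply: le_trans r1.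
have ge0 : forall j : 'I_(size f), true -> 0 <= (nth 0%N f j)%:R * r ^+ j.
  by move=> j _; rewrite mulr_ge0 // exprn_ge0.
case: (ltnP i (size f)) => h.
  rewrite (bigD1 (Ordinal h)) //= ler_wpDr //.
  by apply: sumr_ge0 => j _; apply: ge0.
rewrite nth_default // mul0r.
by apply: sumr_ge0.
Qed.

Lemma bern (r : R) n : 1 <= r -> 1 + n%:R * (r - 1) <= r ^+ n.
Proof.
move=> r1; elim: n => [|n IH]; first by rewrite mul0r addr0 expr0.
have h1 := exprn_ege1 n r1.
have h2 : 1 * (r - 1) <= r ^+ n * (r - 1) by rewrite ler_wpM2r // subr_ge0.
rewrite exprS -natr1.
have -> : r * r ^+ n = r ^+ n + r ^+ n * (r - 1) by ring.
rewrite mul1r in h2.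
lra.
Qed.

End S.

Local Open Scope complex_scope.

Theorem proposition5 (R : realType) (beta : R[i]) :
  algebraicQ beta ->
  (exists g : R[i], conjugateQ beta g /\ g \is Num.real /\ 1 < g) ->
  forall alpha : R, p_finite beta alpha%:C.
Proof.
move=> _ [g [[p [[_ irr pb] pg] [greal g1]]]] alpha.
case/complex_realP: greal => r gE; subst g.
have r1 : (1 < r)%R by rewrite -ltcR.
case: (classic (exists f0, eval_nat f0 beta = alpha%:C)) => [[f0 Hf0]|nf]; last first.
  by exists [::] => f Hf; exfalso; apply: nf; exists f.
set m := (pR R f0).[r].
have key : forall f, eval_nat f beta = alpha%:C -> (pR R f).[r] = m.
  move=> f Hf.
  have E : forall h : {poly nat}, map_poly (ratr : rat -> R[i]) (map_poly (fun n : nat => n%:R : rat) h) = map_poly (fun n : nat => n%:R : R[i]) h.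
    move=> h; rewrite -map_poly_comp_id0 ?rmorph0 //; apply: eq_map_poly => n /=; exact: ratr_nat.
  have E2 : forall h : {poly nat}, eval_nat h (r%:C) = ((pR R h).[r])%:C.
    move=> h; rewrite /eval_nat -horner_map /pR -map_poly_comp_id0 ?rmorph0 //.
    by congr (_.[_]); apply: eq_map_poly => n /=; rewrite rmorph_nat.
  set q := map_poly (fun n : nat => n%:R : rat) f - map_poly (fun n : nat => n%:R : rat) f0.
  have Hq : root (map_poly (ratr : rat -> R[i]) q) beta.
    rewrite /root /q raddfB /= hornerD hornerN !E.
    by move: Hf Hf0; rewrite /eval_nat => -> ->; rewrite subrr.
  move: (@rootQ _ _ _ _ _ irr pb pg Hq); rewrite /root /q raddfB /= hornerD hornerN !E.
  have := E2 f; have := E2 f0; rewrite /eval_nat => -> ->.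
  by rewrite subr_eq0 => /eqP /complexI.
have m0 : (0 <= m)%R.
  apply: le_trans (@term_le _ f0 r 0%N (ltW r1)).
  by rewrite mulr_ge0 // exprn_ge0 // ltW // (lt_trans ltr01).
set N := Num.Def.archi_bound m.
have r10 : (0 < r - 1)%R by rewrite subr_gt0.
have [D HD] : exists D : nat, (m < r ^+ D)%R.
  exists (Num.Def.archi_bound (m / (r - 1))).
  have := archi_boundP (divr_ge0 m0 (ltW r10)).
  rewrite ltr_pdivrMr // => h.
  have := @bern _ r (Num.Def.archi_bound (m / (r - 1))) (ltW r1).
  lra.
exists [seq \poly_(i < D) (nat_of_ord (t (inord i)) : nat) | t : {ffun 'I_D.+1 -> 'I_N} <- enum {ffun 'I_D.+1 -> 'I_N}].
move=> f /key Hm.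
have cb : forall i, (nth 0%N f i < N)%N.
  move=> i; rewrite -(ltr_nat R); apply: le_lt_trans (archi_boundP m0).
  rewrite -Hm; apply: le_trans (@term_le _ f r i (ltW r1)).
  by rewrite ler_peMr // exprn_ege1 // ltW.
have sb : (size f <= D)%N.
  case: (eqVneq f 0) => [->|fn0]; first by rewrite size_poly0.
  have lc : (1 <= nth 0%N f (size f).-1)%N.
    by rewrite lt0n; rewrite -lead_coef_eq0 in fn0; exact: fn0.
  have := @term_le _ f r (size f).-1 (ltW r1); rewrite Hm => h.
  rewrite leqNgt; apply/negP => hD.
  have h1 : (r ^+ D <= r ^+ (size f).-1)%R.
    apply: ler_weXn2l; first exact: ltW.
    by rewrite -ltnS prednK // size_poly_gt0.
  have h2 : (r ^+ (size f).-1 <= (nth 0%N f (size f).-1)%:R * r ^+ (size f).-1)%R.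
    by rewrite ler_peMl ?exprn_ge0 ?ler1n // ltW // (lt_trans ltr01).
  by move: (lt_le_trans HD (le_trans h1 (le_trans h2 h))); rewrite ltxx.
apply/mapP; exists [ffun i : 'I_D.+1 => Ordinal (cb i)]; first by rewrite mem_enum.
apply/polyP => i; rewrite coef_poly; case: ltnP => h; first by rewrite ffunE /= inordK // ltnS ltnW.
by rewrite nth_default // (leq_trans sb h).
Qed.
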